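(* For the two-state-service-rate queue described in the context, assumed positive recurrent and with $\gamma>0$, one has $$\lim_{n\to\infty}\frac{\pi_n^a}{\pi_n^b}=\eta:=\frac{1}{2\lambda}\Bigl(\sqrt{\Delta}+\gamma-\lambda+\mu_b-\mu_a\Bigr),\qquad \Delta=(\lambda-\gamma+\mu_a-\mu_b)^2+4\lambda\gamma,$$ and consequently the effective service rate $\frac{\mu_a\pi_n^a+\mu_b\pi_n^b}{\pi_n}$ converges as $n\to\infty$ to $\mu^\infty=\mu_b+\frac{\eta}{1+\eta}(\mu_a-\mu_b)$.
   Context: Two-state-service-rate queue. Fix parameters $\lambda_a,\lambda_b>0$, $\delta>0$, $\gamma\ge0$, $\mu_a,\mu_b>0$. Set $\lambda=\lambda_a+\lambda_b$, $r=\lambda/(\lambda+\delta)$, and for $n\ge1$, $p_n=\frac{\lambda_a}{\lambda}r^n$ and $\bar p_n=1-p_n$. Consider the continuous-time Markov chain on the state space $\{0\}\cup\{(n,a),(n,b):n\ge1\}$ with the following transitions: from $0$ to $(1,a)$ at rate $\lambda_a$ and to $(1,b)$ at rate $\lambda_b$; for $n\ge1$ and $c\in\{a,b\}$, from $(n,c)$ to $(n+1,c)$ at rate $\lambda$; from $(1,c)$ to $0$ at rate $\mu_c$; for $n\ge1$ and $c\in\{a,b\}$, from $(n+1,c)$ to $(n,a)$ at rate $\mu_c p_n$ and to $(n,b)$ at rate $\mu_c\bar p_n$; for $n\ge1$, from $(n,b)$ to $(n,a)$ at rate $\gamma$. When the chain is positive recurrent, $\pi$ denotes its stationary distribution and $\pi_0=\pi(0)$,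 $\pi_n^a=\pi((n,a))$, $\pi_n^b=\pi((n,b))$, $\pi_n=\pi_n^a+\pi_n^b$ for $n\ge1$. *)

(* Defs.v *)
From Stdlib Require Import Reals Arith.
Open Scope R_scope.

(* States of the chain: [S0] is state 0, [Sa k] is (k+1, a), [Sb k] is (k+1, b). *)
Inductive state : Type := S0 | Sa (k : nat) | Sb (k : nat).

(* enumeration of the (countable) state space: 0, (1,a), (1,b), (2,a), ... *)
Definition enum_state (m : nat) : state :=
  match m with
  | O => S0
  | S m' => if Nat.even m' then Sa (Nat.div2 m') else Sb (Nat.div2 m')
  end.

Definition p_n (la lb delta : R) (n : nat) : R :=
  let lam := la + lb in (la / lam) * (lam / (lam + delta)) ^ n.

(* transition rate q(i,j) for i <> j (and 0 on the diagonal) *)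
Definition rate (la lb delta gamma mua mub : R) (i j : state) : R :=
  let lam := la + lb in
  let p := p_n la lb delta in
  match i, j with
  | S0, Sa O => la
  | S0, Sb O => lb
  | Sa O, S0 => mua
  | Sb O, S0 => mub
  | Sa k, Sa k' =>
      if Nat.eqb k' (S k) then lam
      else if Nat.eqb k (S k') then mua * p (S k') else 0
  | Sa k, Sb k' =>
      if Nat.eqb k (S k') then mua * (1 - p (S k')) else 0
  | Sb k, Sb k' =>
      if Nat.eqb k' (S k) then lam
      else if Nat.eqb k (S k') then mub * (1 - p (S k')) else 0
  | Sb k, Sa k' =>
      if Nat.eqb k (S k') then mub * p (S k')
      else if Nat.eqb k k' then gamma else 0
  | _, _ => 0
  end.

(* pi is a stationary (probability) distribution of the CTMC with rates q:
   pi >= 0, sum pi = 1, and global balance pi Q = 0, i.e. for every state j,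
   sum_i pi(i) q(i,j) = pi(j) q(j) where q(j) = sum_k q(j,k) is the exit rate. *)
Definition stationary_dist (q : state -> state -> R) (pi : state -> R) : Prop :=
  (forall s, 0 <= pi s) /\
  infinite_sum (fun m => pi (enum_state m)) 1 /\
  (forall j, exists qj,
      infinite_sum (fun m => q j (enum_state m)) qj /\
      infinite_sum (fun m => pi (enum_state m) * q (enum_state m) j) (pi j * qj)).

(* Main.v *)
Require Import Defs.
From Stdlib Require Import Reals Lra Psatz Lia List Arith.
Import ListNotations.
Open Scope R_scope.

Definition idx (s : state) : nat :=
  match s with S0 => 0 | Sa k => S (2*k) | Sb k => S (S (2*k)) end.

Lemma enum_idx s : enum_state (idx s) = s.
Proof.
  destruct s as [|k|k]; cbn -[Nat.mul Nat.even Nat.div2]; auto.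
  - rewrite Nat.even_mul. cbn -[Nat.mul Nat.div2]. rewrite Nat.div2_double. auto.
  - rewrite Nat.even_succ, Nat.odd_mul. cbn -[Nat.mul Nat.div2]. rewrite Nat.div2_succ_double. auto.
Qed.

Lemma idx_enum m : idx (enum_state m) = m.
Proof.
  destruct m as [|m]; simpl; auto.
  destruct (Nat.even m) eqn:E; simpl.
  - apply Nat.even_spec in E. destruct E as [j ->].
    rewrite Nat.div2_double. lia.
  - assert (Nat.odd m = true) by (rewrite <- Nat.negb_even, E; auto).
    apply Nat.odd_spec in H. destruct H as [j ->].
    replace (2*j+1)%nat with (S (2*j)) by lia.
    rewrite Nat.div2_succ_double. lia.
Qed.

Definition sdec (s t : state) : {s = t} + {s <> t}.
Proof. decide equality; apply Nat.eq_dec. Defined.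

Lemma sum_delta (i : nat) (c : R) n :
  sum_f_R0 (fun m => if Nat.eq_dec m i then c else 0) n =
  if le_lt_dec i n then c else 0.
Proof.
  induction n as [|n IH]; cbn [sum_f_R0].
  - destruct (Nat.eq_dec 0 i); destruct (le_lt_dec i 0); auto; lia.
  - rewrite IH. destruct (Nat.eq_dec (S n) i); destruct (le_lt_dec i n);
    destruct (le_lt_dec i (S n)); try lia; lra.
Qed.

Lemma isum_delta (s0 : state) (c : R) :
  infinite_sum (fun m => if sdec (enum_state m) s0 then c else 0) c.
Proof.
  intros eps Heps. exists (idx s0). intros n Hn.
  assert (E : forall m, (if sdec (enum_state m) s0 then c else 0) =
                        (if Nat.eq_dec m (idx s0) then c else 0)).
  { intro m. destruct (sdec (enum_state m) s0); destruct (Nat.eq_dec m (idx s0)); auto.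
    - exfalso. apply n0. rewrite <- e. symmetry. apply idx_enum.
    - exfalso. apply n0. rewrite e. apply enum_idx. }
  rewrite (sum_eq _ _ n (fun m _ => E m)).
  rewrite sum_delta. destruct (le_lt_dec (idx s0) n); try lia.
  unfold Rdist. rewrite Rminus_diag, Rabs_R0. lra.
Qed.

Lemma isum_plus f g a b : infinite_sum f a -> infinite_sum g b ->
  infinite_sum (fun m => f m + g m) (a + b).
Proof.
  intros Hf Hg eps Heps.
  destruct (Hf (eps/2)) as [N1 H1]; try lra.
  destruct (Hg (eps/2)) as [N2 H2]; try lra.
  exists (N1 + N2)%nat. intros n Hn.
  rewrite sum_plus. specialize (H1 n ltac:(lia)). specialize (H2 n ltac:(lia)).
  unfold Rdist in *. 
  replace (sum_f_R0 f n + sum_f_R0 g n - (a + b)) with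
    ((sum_f_R0 f n - a) + (sum_f_R0 g n - b)) by ring.
  eapply Rle_lt_trans. apply Rabs_triang. lra.
Qed.

Lemma isum_ext f g a : (forall m, f m = g m) -> infinite_sum f a -> infinite_sum g a.
Proof.
  intros E H eps Heps. destruct (H eps Heps) as [N HN]. exists N. intros n Hn.
  rewrite <- (sum_eq _ _ n (fun m _ => E m)). auto.
Qed.

Fixpoint lsum (F : state -> R) (L : list state) : R :=
  match L with [] => 0 | s :: L' => F s + lsum F L' end.

Lemma lsum_ext F G L : (forall s, In s L -> F s = G s) -> lsum F L = lsum G L.
Proof.
  induction L; simpl; intros; auto. rewrite H, IHL; auto.
Qed.

Lemma fin_sum (L : list state) : forall (F : state -> R), NoDup L ->
  (forall s, ~ In s L -> F s = 0) ->
  infinite_sum (fun m => F (enum_state m)) (lsum F L).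
Proof.
  induction L as [|s0 L IH]; intros F ND HZ; simpl.
  - intros eps Heps. exists 0%nat. intros n _.
    rewrite (sum_eq _ (fun _ => 0) n).
    + replace (sum_f_R0 (fun _ => 0) n) with 0.
      * unfold Rdist. rewrite Rminus_diag, Rabs_R0. lra.
      * induction n; simpl; auto; lra.
    + intros. apply HZ. auto.
  - inversion ND; subst.
    set (F' := fun s => if sdec s s0 then 0 else F s).
    assert (HL : lsum F L = lsum F' L).
    { apply lsum_ext. intros s Hs. unfold F'. destruct (sdec s s0); auto.
      subst. contradiction. }
    rewrite HL.
    apply isum_ext with (fun m => (if sdec (enum_state m) s0 then F s0 else 0) + F' (enum_state m)).
    { intro m. unfold F'. destruct (sdec (enum_state m) s0); [rewrite e|]; lra. }
    apply isum_plus. apply isum_delta.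
    apply IH; auto. intros s Hs. unfold F'. destruct (sdec s s0); auto.
    apply HZ. simpl. intros [H|H]; auto.
Qed.

Lemma bal_gen (q : state -> state -> R) (pi : state -> R) j Lin Lout :
  (forall j, exists qj,
      infinite_sum (fun m => q j (enum_state m)) qj /\
      infinite_sum (fun m => pi (enum_state m) * q (enum_state m) j) (pi j * qj)) ->
  NoDup Lin -> NoDup Lout -> (forall s, ~In s Lout -> q j s = 0) ->
  (forall s, ~In s Lin -> pi s * q s j = 0) ->
  lsum (fun s => pi s * q s j) Lin = pi j * lsum (q j) Lout.
Proof.
  intros Hb N1 N2 Z1 Z2. destruct (Hb j) as [qj [H1 H2]].
  pose proof (fin_sum Lout (q j) N2 Z1) as H3.
  pose proof (fin_sum Lin (fun s => pi s * q s j) N1 Z2) as H4.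
  rewrite (uniqueness_sum _ _ _ H3 H1).
  exact (uniqueness_sum _ _ _ H4 H2).
Qed.

Ltac eqb_cases := repeat match goal with
  | |- context [Nat.eqb ?a ?b] => destruct (Nat.eqb_spec a b)
  end.
Ltac eqb_cases_in H := repeat match type of H with
  | context [Nat.eqb ?a ?b] => destruct (Nat.eqb_spec a b)
  end.

Ltac nodup_tac := repeat constructor; simpl;
  intros HH; repeat destruct HH as [HH|HH]; try discriminate; try (injection HH; lia); auto.

Ltac zero_tac := intros s Hs; destruct s as [|[|x]|[|x]]; unfold rate; cbn -[Nat.eqb]; eqb_cases;
  try ring; exfalso; apply Hs; simpl; repeat (first [left; solve [reflexivity | f_equal; lia] | right]).


Lemma bal_S0 la lb delta gamma mua mub pi :
  stationary_dist (rate la lb delta gamma mua mub) pi ->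
  pi S0 * (la + lb) = mua * pi (Sa 0) + mub * pi (Sb 0).
Proof.
  intros [_ [_ Hb]].
  pose proof (bal_gen _ pi S0 [Sa 0; Sb 0] [Sa 0; Sb 0] Hb) as H.
  lapply H; [clear H; intro H|nodup_tac]. lapply H; [clear H; intro H|nodup_tac].
  lapply H; [clear H; intro H|zero_tac]. lapply H; [clear H; intro H|zero_tac].
  simpl in H. lra.
Qed.

Ltac bal_tac pi Lin Lout j Hb :=
  let H := fresh "H" in
  assert (H := bal_gen _ pi j Lin Lout Hb ltac:(nodup_tac) ltac:(nodup_tac) ltac:(zero_tac) ltac:(zero_tac));
  simpl in H; unfold rate in H; cbn -[Nat.eqb] in H; eqb_cases_in H; try (exfalso; lia); try lra.

Lemma bal_Sa0 la lb delta gamma mua mub pi :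
  stationary_dist (rate la lb delta gamma mua mub) pi ->
  pi (Sa 0) * (la + lb + mua) = la * pi S0 + gamma * pi (Sb 0) +
     p_n la lb delta 1 * (mua * pi (Sa 1) + mub * pi (Sb 1)).
Proof.
  intros [_ [_ Hb]]. bal_tac pi [S0; Sb 0; Sa 1; Sb 1] [Sa 1; S0] (Sa 0) Hb.
Qed.

Lemma bal_Sb0 la lb delta gamma mua mub pi :
  stationary_dist (rate la lb delta gamma mua mub) pi ->
  pi (Sb 0) * (la + lb + mub + gamma) = lb * pi S0 +
     (1 - p_n la lb delta 1) * (mua * pi (Sa 1) + mub * pi (Sb 1)).
Proof.
  intros [_ [_ Hb]]. bal_tac pi [S0; Sa 1; Sb 1] [Sb 1; Sa 0; S0] (Sb 0) Hb.
Qed.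

Lemma bal_SaS la lb delta gamma mua mub pi k :
  stationary_dist (rate la lb delta gamma mua mub) pi ->
  pi (Sa (S k)) * (la + lb + mua) = (la + lb) * pi (Sa k) + gamma * pi (Sb (S k)) +
     p_n la lb delta (S (S k)) * (mua * pi (Sa (S (S k))) + mub * pi (Sb (S (S k)))).
Proof.
  intros [_ [_ Hb]].
  destruct k as [|k0]; [ bal_tac pi [Sa 0%nat; Sb (S 0%nat); Sa (S (S 0%nat)); Sb (S (S 0%nat))] [Sa (S (S 0%nat)); Sa 0%nat; Sb 0%nat] (Sa (S 0%nat)) Hb | bal_tac pi [Sa (S k0); Sb (S (S k0)); Sa (S (S (S k0))); Sb (S (S (S k0)))] [Sa (S (S (S k0))); Sa (S k0); Sb (S k0)] (Sa (S (S k0))) Hb ].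
Qed.

Lemma bal_SbS la lb delta gamma mua mub pi k :
  stationary_dist (rate la lb delta gamma mua mub) pi ->
  pi (Sb (S k)) * (la + lb + mub + gamma) = (la + lb) * pi (Sb k) +
     (1 - p_n la lb delta (S (S k))) * (mua * pi (Sa (S (S k))) + mub * pi (Sb (S (S k)))).
Proof.
  intros [_ [_ Hb]].
  destruct k as [|k0]; [ bal_tac pi [Sb 0%nat; Sa (S (S 0%nat)); Sb (S (S 0%nat))] [Sb (S (S 0%nat)); Sa (S 0%nat); Sb 0%nat; Sa 0%nat] (Sb (S 0%nat)) Hb | bal_tac pi [Sb (S k0); Sa (S (S (S k0))); Sb (S (S (S k0)))] [Sb (S (S (S k0))); Sa (S (S k0)); Sb (S k0); Sa (S k0)] (Sb (S (S k0))) Hb ].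
Qed.

Lemma contr_lemma (d e : nat -> R) (kap : R) :
  0 <= kap < 1 -> (forall k, 0 <= d k) ->
  (forall k, d (S k) <= kap * d k + e k) -> Un_cv e 0 -> Un_cv d 0.
Proof.
  intros Hk Hd Hrec He eps Heps.
  destruct (He (eps * (1 - kap) / 2)) as [N HN].
  { apply Rmult_gt_0_compat; [|lra]. apply Rmult_gt_0_compat; lra. }
  assert (Hj : forall j, d (N + j)%nat <= kap ^ j * d N + eps / 2).
  { induction j as [|j IH].
    - rewrite Nat.add_0_r. simpl. lra.
    - replace (N + S j)%nat with (S (N + j)) by lia.
      eapply Rle_trans. apply Hrec.
      specialize (HN (N + j)%nat ltac:(lia)). unfold Rdist in HN.
      rewrite Rminus_0_r in HN. apply Rabs_def2 in HN.
      simpl. 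
      assert (kap * d (N + j)%nat <= kap * (kap ^ j * d N + eps / 2)).
      { apply Rmult_le_compat_l; lra. }
      assert (kap * (eps/2) + eps * (1 - kap) / 2 = eps / 2) by field.
      nra. }
  destruct (pow_lt_1_zero kap ltac:(rewrite Rabs_pos_eq; lra) (eps / 2 / (d N + 1)))
    as [M HM].
  { apply Rdiv_lt_0_compat; [lra|]. specialize (Hd N). lra. }
  exists (N + M)%nat. intros n Hn.
  replace n with (N + (n - N))%nat by lia.
  unfold Rdist. rewrite Rminus_0_r, Rabs_pos_eq by apply Hd.
  eapply Rle_lt_trans. apply Hj.
  specialize (HM (n - N)%nat ltac:(lia)). rewrite Rabs_pos_eq in HM by (apply pow_le; lra).
  assert (HdN := Hd N).
  assert (kap ^ (n - N) * (d N + 1) < eps / 2).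
  { apply Rmult_lt_reg_r with (/ (d N + 1)). apply Rinv_0_lt_compat; lra.
    rewrite Rmult_assoc, Rinv_r by lra. lra. }
  assert (0 <= kap ^ (n - N)) by (apply pow_le; lra).
  nra.
Qed.

Lemma cv_dist (u : nat -> R) (l : R) : Un_cv (fun k => Rabs (u k - l)) 0 -> Un_cv u l.
Proof.
  intros H eps Heps. destruct (H eps Heps) as [N HN]. exists N. intros n Hn.
  specialize (HN n Hn). unfold Rdist in *. rewrite Rminus_0_r, Rabs_Rabsolu in HN. auto.
Qed.

Lemma cv_dom (u v : nat -> R) (l m C : R) : 0 < C ->
  (forall k, Rabs (v k - m) <= C * Rabs (u k - l)) -> Un_cv u l -> Un_cv v m.
Proof.
  intros HC Hb H eps Heps. destruct (H (eps / C)) as [N HN].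
  { apply Rdiv_lt_0_compat; lra. }
  exists N. intros n Hn. specialize (HN n Hn). unfold Rdist in *.
  eapply Rle_lt_trans. apply Hb.
  apply Rmult_lt_reg_r with (/ C). apply Rinv_0_lt_compat; lra.
  replace (C * Rabs (u n - l) * / C) with (Rabs (u n - l)) by (field; lra). auto.
Qed.

Lemma pert lam la lb mua mub gamma p t :
  0 < la -> 0 < lb -> lam = la + lb -> 0 < mua -> 0 < mub -> 0 < gamma ->
  0 <= p -> p * lam <= la -> 0 <= t ->
  0 <= ((mub + gamma + p * lam) * t + (gamma + p * lam)) /
         ((1 - p) * lam * t + (mua + (1 - p) * lam))
       - ((mub + gamma) * t + gamma) / (lam * t + mua + lam)
  <= p * ((lam + mub + 2 * gamma) / lb).
Proof.
  intros Hla Hlb Hl Hmua Hmub Hg Hp Hpl Ht.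
  set (D0 := lam * t + mua + lam).
  set (D1 := (1 - p) * lam * t + (mua + (1 - p) * lam)).
  set (N0 := (mub + gamma) * t + gamma).
  assert (HD0 : 0 < D0) by (unfold D0; nra).
  assert (HD1 : lb * (t + 1) <= D1).
  { unfold D1. assert (0 <= (la - p * lam) * (t + 1)) by nra. nra. }
  assert (HD1p : 0 < D1) by nra.
  assert (E : ((mub + gamma + p * lam) * t + (gamma + p * lam)) / D1 - N0 / D0
              = p * lam * (t + 1) * (N0 + D0) / (D0 * D1)).
  { assert (HD0' : lam * t + mua + lam <> 0) by (fold D0; lra).
    assert (HD1' : (1 - p) * lam * t + (mua + (1 - p) * lam) <> 0) by (fold D1; lra).
    unfold N0, D0, D1. field. split; auto. }
  rewrite E. split.
  - apply Rmult_le_pos. assert (0 <= N0) by (unfold N0; nra). 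
    assert (0 <= p * lam * (t+1)) by (apply Rmult_le_pos; [apply Rmult_le_pos|]; lra).
    apply Rmult_le_pos; lra.
    left. apply Rinv_0_lt_compat. nra.
  - assert (H1 : lam * N0 <= (mub + gamma + gamma) * D0).
    { unfold N0, D0. assert (0 <= gamma * lam * t) by (apply Rmult_le_pos; [apply Rmult_le_pos|]; lra).
      assert (0 <= (mub + gamma + gamma) * mua) by (apply Rmult_le_pos; lra).
      assert (0 <= (mub + gamma) * lam) by (apply Rmult_le_pos; lra).
      ring_simplify. lra. }
    clearbody N0 D0 D1.
    assert (H2 : p * lam * (t + 1) * (N0 + D0) * lb <= p * (lam + mub + 2 * gamma) * (D0 * D1)).
    { assert (lam * (N0 + D0) <= (lam + mub + 2 * gamma) * D0) by lra.
      assert (0 <= p * (t + 1)) by nra.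
      assert (p * (t + 1) * (lam * (N0 + D0)) <= p * (t + 1) * ((lam + mub + 2 * gamma) * D0))
        by (apply Rmult_le_compat_l; lra).
      assert (0 <= p * (lam + mub + 2 * gamma) * D0) by (apply Rmult_le_pos; [apply Rmult_le_pos|]; lra).
      assert (p * (lam + mub + 2 * gamma) * D0 * (lb * (t + 1)) <= p * (lam + mub + 2 * gamma) * D0 * D1)
        by (apply Rmult_le_compat_l; lra).
      nra. }
    unfold Rdiv. 
    apply Rmult_le_reg_r with (D0 * D1 * lb). repeat apply Rmult_lt_0_compat; lra.
    replace (p * lam * (t + 1) * (N0 + D0) * / (D0 * D1) * (D0 * D1 * lb)) with
      (p * lam * (t + 1) * (N0 + D0) * lb) by (field; lra).
    replace (p * ((lam + mub + 2 * gamma) * / lb) * (D0 * D1 * lb)) with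
      (p * (lam + mub + 2 * gamma) * (D0 * D1)) by (field; lra).
    exact H2.
Qed.

Lemma ratio_conv (lam la lb mua mub gamma : R) (T P : nat -> R) :
  0 < la -> 0 < lb -> lam = la + lb -> 0 < mua -> 0 < mub -> 0 < gamma ->
  (forall k, 0 <= T k) -> (forall k, 0 <= P k /\ P k * lam <= la) -> Un_cv P 0 ->
  (forall k, T (S k) = ((mub + gamma + P k * lam) * T k + (gamma + P k * lam)) /
         ((1 - P k) * lam * T k + (mua + (1 - P k) * lam))) ->
  let eta := / (2 * lam) * (sqrt ((lam - gamma + mua - mub) ^ 2 + 4 * lam * gamma)
                           + gamma - lam + mub - mua) in 0 < eta /\ Un_cv T eta.
Proof.
  intros Hla Hlb Hl Hmua Hmub Hg HT HP HPc Hrec eta0.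
  unfold eta0.
  assert (Hlam : 0 < lam) by lra.
  set (u := gamma + mub - mua - lam).
  assert (HD : (lam - gamma + mua - mub) ^ 2 + 4 * lam * gamma = u * u + 4 * lam * gamma)
    by (unfold u; ring).
  rewrite HD.
  set (s := sqrt (u * u + 4 * lam * gamma)).
  assert (Hs0 : 0 <= s) by apply sqrt_pos.
  assert (Hss : s * s = u * u + 4 * lam * gamma).
  { apply sqrt_sqrt. assert (0 <= u * u) by nra. assert (0 < lam * gamma) by nra. lra. }
  assert (Hlg : 0 < lam * gamma) by nra.
  assert (Hsu1 : u < s) by nra.
  assert (Hsu2 : - u < s) by nra.
  set (eta := / (2 * lam) * (s + gamma - lam + mub - mua)).
  assert (H2 : 2 * lam * eta = s + u).
  { unfold eta, u. field. lra. }
  clearbody eta.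
  assert (Heta : 0 < eta) by nra.
  split; [exact Heta|].
  assert (Hq : lam * eta * eta - u * eta - gamma = 0).
  { assert (4 * lam * (lam * eta * eta - u * eta - gamma) = 0).
    { replace (4 * lam * (lam * eta * eta - u * eta - gamma)) with
        ((2 * lam * eta) * (2 * lam * eta) - 2 * u * (2 * lam * eta) - 4 * lam * gamma) by ring.
      rewrite H2. nra. }
    nra. }
  set (sig := mub + gamma - lam * eta).
  assert (Hsig1 : 0 < sig).
  { unfold sig. assert (s < mub + gamma + mua + lam).
    { assert ((mub + gamma) * (mua + lam) > lam * gamma) by nra.
      assert (s * s < (mub + gamma + mua + lam) * (mub + gamma + mua + lam)) by (unfold u in Hss; nra).
      nra. }
    unfold u in H2. lra. }
  assert (Hsig2 : sig < mua + lam) by (unfold sig, u in *; lra).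
  set (kap := sig / (mua + lam)).
  assert (Hkap : 0 <= kap < 1).
  { unfold kap. split. apply Rlt_le, Rdiv_lt_0_compat; lra.
    apply Rmult_lt_reg_r with (mua + lam). lra. unfold Rdiv. rewrite Rmult_assoc, Rinv_l; lra. }
  set (K := (lam + mub + 2 * gamma) / lb).
  apply cv_dist.
  apply (contr_lemma _ (fun k => P k * K) kap Hkap).
  - intros; apply Rabs_pos.
  - intro k. simpl. rewrite Hrec.
    set (t := T k). set (p := P k).
    assert (Ht : 0 <= t) by apply HT.
    destruct (HP k) as [Hp1 Hp2]. fold p in Hp1, Hp2.
    destruct (pert lam la lb mua mub gamma p t Hla Hlb Hl Hmua Hmub Hg Hp1 Hp2 Ht) as [B1 B2].
    set (f0 := ((mub + gamma) * t + gamma) / (lam * t + mua + lam)) in *.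
    set (fp := ((mub + gamma + p * lam) * t + (gamma + p * lam)) /
               ((1 - p) * lam * t + (mua + (1 - p) * lam))) in *.
    assert (HD0 : 0 < lam * t + mua + lam) by nra.
    assert (Hf0 : f0 - eta = (t - eta) * (sig / (lam * t + mua + lam))).
    { unfold f0, sig. field_simplify; [|lra|lra].
      apply Rmult_eq_compat_r. unfold u in Hq. lra. }
    replace (fp - eta) with ((fp - f0) + (f0 - eta)) by ring.
    eapply Rle_trans. apply Rabs_triang.
    rewrite Hf0, Rabs_mult, (Rabs_pos_eq (fp - f0)) by lra.
    rewrite (Rabs_pos_eq (sig / _)) by (apply Rlt_le, Rdiv_lt_0_compat; lra).
    assert (sig / (lam * t + mua + lam) <= kap).
    { unfold kap, Rdiv. apply Rmult_le_compat_l. lra.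
      apply Rinv_le_contravar; nra. }
    assert (Rabs (t - eta) * (sig / (lam * t + mua + lam)) <= kap * Rabs (t - eta)).
    { rewrite Rmult_comm. apply Rmult_le_compat_r. apply Rabs_pos. auto. }
    unfold K. lra.
  - intros eps Heps. assert (HK : 0 < K) by (unfold K; apply Rdiv_lt_0_compat; lra).
    destruct (HPc (eps / K)) as [N HN]. apply Rdiv_lt_0_compat; lra.
    exists N. intros n Hn. specialize (HN n Hn). unfold Rdist in *.
    rewrite Rminus_0_r in *. rewrite Rabs_mult, (Rabs_pos_eq K) by lra.
    apply Rmult_lt_reg_r with (/ K). apply Rinv_0_lt_compat; lra.
    rewrite Rmult_assoc, Rinv_r by lra. rewrite Rmult_1_r. exact HN.
Qed.

Lemma solve2 lam mua mub gamma p A B x y :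
  x * (lam + mua) = A + gamma * y + p * lam * (x + y) ->
  y * (lam + mub + gamma) = B + (1 - p) * lam * (x + y) ->
  (mua * (mub + gamma + p * lam) + (1 - p) * lam * mub) * x =
     (mub + gamma + p * lam) * A + (gamma + p * lam) * B /\
  (mua * (mub + gamma + p * lam) + (1 - p) * lam * mub) * y =
     ((1 - p) * lam) * A + (mua + (1 - p) * lam) * B.
Proof.
  intros H1 H2.
  assert (HA : A = x * (lam + mua) - gamma * y - p * lam * (x + y)) by lra.
  assert (HB : B = y * (lam + mub + gamma) - (1 - p) * lam * (x + y)) by lra.
  rewrite HA, HB. split; ring.
Qed.

Lemma pos_of_mul d x : 0 < d -> 0 < d * x -> 0 < x.
Proof. intros. nra. Qed.

Lemma zero_of_mul d x : 0 < d -> d * x = 0 -> x = 0.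
Proof. intros. nra. Qed.

Lemma P_facts la lb delta n : 0 < la -> 0 < lb -> 0 < delta ->
  0 < p_n la lb delta n /\ p_n la lb delta n * (la + lb) <= la.
Proof.
  intros. unfold p_n. set (r := (la + lb) / (la + lb + delta)).
  assert (Hr : 0 < r < 1).
  { unfold r. split. apply Rdiv_lt_0_compat; lra.
    apply Rmult_lt_reg_r with (la + lb + delta). lra. unfold Rdiv.
    rewrite Rmult_assoc, Rinv_l; lra. }
  assert (Hrn : 0 < r ^ n <= 1).
  { induction n; simpl; lra || nra. }
  split.
  - apply Rmult_lt_0_compat; [apply Rdiv_lt_0_compat; lra | lra].
  - replace (la / (la + lb) * r ^ n * (la + lb)) with (la * r ^ n) by (field; lra). nra.
Qed.

Lemma P_cv la lb delta : 0 < la -> 0 < lb -> 0 < delta ->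
  Un_cv (fun k => p_n la lb delta (S (S k))) 0.
Proof.
  intros Hla Hlb Hd eps Heps. unfold p_n. set (r := (la + lb) / (la + lb + delta)).
  assert (Hr : 0 < r < 1).
  { unfold r. split. apply Rdiv_lt_0_compat; lra.
    apply Rmult_lt_reg_r with (la + lb + delta). lra. unfold Rdiv.
    rewrite Rmult_assoc, Rinv_l; lra. }
  clearbody r.
  destruct (pow_lt_1_zero r ltac:(rewrite Rabs_pos_eq; lra) eps Heps) as [N HN].
  exists N. intros n Hn. unfold Rdist. rewrite Rminus_0_r.
  specialize (HN (S (S n)) ltac:(lia)).
  assert (Hq : 0 < la / (la + lb) < 1).
  { split. apply Rdiv_lt_0_compat; lra.
    apply Rmult_lt_reg_r with (la + lb). lra. unfold Rdiv.
    rewrite Rmult_assoc, Rinv_l; lra. }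
  assert (0 < r ^ (S (S n))) by (apply pow_lt; lra).
  rewrite Rabs_pos_eq in HN by lra.
  rewrite Rabs_pos_eq by (apply Rmult_le_pos; lra).
  apply Rle_lt_trans with (r ^ S (S n)); [|lra].
  rewrite <- (Rmult_1_l (r ^ S (S n))) at 2. apply Rmult_le_compat_r; lra.
Qed.

Theorem mainTheorem7 (la lb delta gamma mua mub : R)
  (hla : 0 < la) (hlb : 0 < lb) (hdelta : 0 < delta) (hgamma : 0 < gamma)
  (hmua : 0 < mua) (hmub : 0 < mub)
  (pi : state -> R)
  (hpi : stationary_dist (rate la lb delta gamma mua mub) pi) :
  let lam := la + lb in
  let Delta := (lam - gamma + mua - mub) ^ 2 + 4 * lam * gamma in
  let eta := / (2 * lam) * (sqrt Delta + gamma - lam + mub - mua) in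
  Un_cv (fun k => pi (Sa k) / pi (Sb k)) eta /\
  Un_cv (fun k => (mua * pi (Sa k) + mub * pi (Sb k)) / (pi (Sa k) + pi (Sb k)))
        (mub + eta / (1 + eta) * (mua - mub)).
Proof.
  intros lam Delta eta. unfold eta, Delta, lam. clear eta Delta lam.
  remember (la + lb) as lam eqn:Hl.
  assert (Hlam : 0 < lam) by lra.
  remember (p_n la lb delta) as P eqn:HPdef.
  assert (HP : forall n, 0 < P n /\ P n * lam <= la) by (intro; subst lam P; apply P_facts; auto).
  assert (HPc : Un_cv (fun k => P (S (S k))) 0) by (subst P; apply P_cv; auto).
  assert (Hcut : forall k, mua * pi (Sa (S k)) + mub * pi (Sb (S k)) = lam * (pi (Sa k) + pi (Sb k))).
  { induction k.
    - pose proof (bal_S0 _ _ _ _ _ _ _ hpi). pose proof (bal_Sa0 _ _ _ _ _ _ _ hpi).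
      pose proof (bal_Sb0 _ _ _ _ _ _ _ hpi). try rewrite <- HPdef in H; try rewrite <- HPdef in H0; try rewrite <- HPdef in H1. subst lam. lra.
    - pose proof (bal_SaS _ _ _ _ _ _ _ k hpi).
      pose proof (bal_SbS _ _ _ _ _ _ _ k hpi). try rewrite <- HPdef in H; try rewrite <- HPdef in H0. subst lam. lra. }
  assert (Hdet : forall n, 0 < mua * (mub + gamma + P n * lam) + (1 - P n) * lam * mub).
  { intro n. destruct (HP n). assert (0 < 1 - P n) by nra.
    assert (0 < P n * lam) by (apply Rmult_lt_0_compat; lra).
    assert (0 < mua * (mub + gamma + P n * lam)) by (apply Rmult_lt_0_compat; lra).
    assert (0 < (1 - P n) * lam * mub) by (repeat apply Rmult_lt_0_compat; lra). lra. }
  assert (L1 := solve2 lam mua mub gamma (P 1%nat) (la * pi S0) (lb * pi S0) (pi (Sa 0)) (pi (Sb 0))).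
  lapply L1; [clear L1; intro L1|].
  2:{ pose proof (bal_Sa0 _ _ _ _ _ _ _ hpi). try rewrite <- HPdef in H. rewrite (Hcut 0%nat) in H.
      rewrite <- Hl in H. lra. }
  lapply L1; [clear L1; intro L1|].
  2:{ pose proof (bal_Sb0 _ _ _ _ _ _ _ hpi). try rewrite <- HPdef in H. rewrite (Hcut 0%nat) in H.
      rewrite <- Hl in H. lra. }
  assert (LS : forall k, let p := P (S (S k)) in
     (mua * (mub + gamma + p * lam) + (1 - p) * lam * mub) * pi (Sa (S k)) =
       (mub + gamma + p * lam) * (lam * pi (Sa k)) + (gamma + p * lam) * (lam * pi (Sb k)) /\
     (mua * (mub + gamma + p * lam) + (1 - p) * lam * mub) * pi (Sb (S k)) =
       ((1 - p) * lam) * (lam * pi (Sa k)) + (mua + (1 - p) * lam) * (lam * pi (Sb k))).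
  { intros k p. apply solve2.
    - pose proof (bal_SaS _ _ _ _ _ _ _ k hpi). try rewrite <- HPdef in H. rewrite (Hcut (S k)) in H.
      rewrite <- Hl in H. unfold p. lra.
    - pose proof (bal_SbS _ _ _ _ _ _ _ k hpi). try rewrite <- HPdef in H. rewrite (Hcut (S k)) in H.
      rewrite <- Hl in H. unfold p. lra. }
  pose proof hpi as [Hnn [Hsum _]].
  assert (HZ : 0 < pi S0).
  { destruct (Rle_lt_or_eq_dec 0 (pi S0) (Hnn S0)) as [H|H]; auto. exfalso.
    assert (Hall : forall k, pi (Sa k) = 0 /\ pi (Sb k) = 0).
    { induction k.
      - destruct L1 as [A1 A2]. rewrite <- H in A1, A2.
        split; eapply zero_of_mul; [apply (Hdet 1%nat)| rewrite A1; ring |apply (Hdet 1%nat)| rewrite A2; ring].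
      - destruct (LS k) as [A1 A2]. destruct IHk as [I1 I2]. rewrite I1, I2 in *.
        split; eapply zero_of_mul; [apply (Hdet (S (S k)))| rewrite A1; ring |apply (Hdet (S (S k)))| rewrite A2; ring]. }
    assert (Hz : forall s, pi s = 0).
    { intros [|k|k]; auto. apply Hall. apply Hall. }
    pose proof (fin_sum nil pi (NoDup_nil _) (fun s _ => Hz s)).
    pose proof (uniqueness_sum _ _ _ H0 Hsum). simpl in H1. lra. }
  assert (Hpos : forall k, 0 < pi (Sa k) /\ 0 < pi (Sb k)).
  { induction k.
    - destruct L1 as [A1 A2]. destruct (HP 1%nat). assert (0 < 1 - P 1%nat) by nra.
      split; eapply pos_of_mul; [apply (Hdet 1%nat)| rewrite A1 |apply (Hdet 1%nat)| rewrite A2].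
      + assert (0 < (mub + gamma + P 1%nat * lam) * (la * pi S0)) by (apply Rmult_lt_0_compat; nra).
        assert (0 <= (gamma + P 1%nat * lam) * (lb * pi S0)) by (apply Rmult_le_pos; nra). lra.
      + assert (0 < (1 - P 1%nat) * lam * (la * pi S0)) by (apply Rmult_lt_0_compat; nra).
        assert (0 <= (mua + (1 - P 1%nat) * lam) * (lb * pi S0)) by (apply Rmult_le_pos; nra). lra.
    - destruct (LS k) as [A1 A2]. destruct IHk as [I1 I2].
      destruct (HP (S (S k))). assert (0 < 1 - P (S (S k))) by nra.
      split; eapply pos_of_mul; [apply (Hdet (S (S k)))| rewrite A1 |apply (Hdet (S (S k)))| rewrite A2].
      + assert (0 < (mub + gamma + P (S (S k)) * lam) * (lam * pi (Sa k))) by (apply Rmult_lt_0_compat; nra).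
        assert (0 <= (gamma + P (S (S k)) * lam) * (lam * pi (Sb k))) by (apply Rmult_le_pos; nra). lra.
      + assert (0 < (1 - P (S (S k))) * lam * (lam * pi (Sa k))) by (apply Rmult_lt_0_compat; nra).
        assert (0 <= (mua + (1 - P (S (S k))) * lam) * (lam * pi (Sb k))) by (apply Rmult_le_pos; nra). lra. }
  assert (HT : forall k, pi (Sa (S k)) / pi (Sb (S k)) =
     ((mub + gamma + P (S (S k)) * lam) * (pi (Sa k) / pi (Sb k)) + (gamma + P (S (S k)) * lam)) /
         ((1 - P (S (S k))) * lam * (pi (Sa k) / pi (Sb k)) + (mua + (1 - P (S (S k))) * lam))).
  { intro k. destruct (LS k) as [A1 A2]. destruct (Hpos k) as [X0 Y0]. destruct (Hpos (S k)) as [X1 Y1].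
    assert (Hd := Hdet (S (S k))). destruct (HP (S (S k))) as [Hp1 Hp2].
    revert A1 A2 Hd Hp1 Hp2. generalize (P (S (S k))). intros p A1 A2 Hd Hp1 Hp2.
    set (det := mua * (mub + gamma + p * lam) + (1 - p) * lam * mub) in *.
    assert (EX : pi (Sa (S k)) = ((mub + gamma + p * lam) * (lam * pi (Sa k)) +
                  (gamma + p * lam) * (lam * pi (Sb k))) / det) by (rewrite <- A1; field; lra).
    assert (EY : pi (Sb (S k)) = ((1 - p) * lam * (lam * pi (Sa k)) +
                  (mua + (1 - p) * lam) * (lam * pi (Sb k))) / det) by (rewrite <- A2; field; lra).
    assert (Hq : 0 < 1 - p).
    { assert (p * lam < lam) by lra. apply Rlt_0_minus. 
      apply Rmult_lt_reg_r with lam; lra. }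
    assert (0 < (1 - p) * lam * (lam * pi (Sa k)) + (mua + (1 - p) * lam) * (lam * pi (Sb k))).
    { assert (0 < (1 - p) * lam * (lam * pi (Sa k))) by (repeat apply Rmult_lt_0_compat; lra).
      assert (0 < (mua + (1 - p) * lam) * (lam * pi (Sb k))).
      { apply Rmult_lt_0_compat. assert (0 < (1 - p) * lam) by (apply Rmult_lt_0_compat; lra). lra.
        apply Rmult_lt_0_compat; lra. }
      lra. }
    assert (0 < (1 - p) * lam * pi (Sa k) + (mua + (1 - p) * lam) * pi (Sb k)).
    { assert (0 < (1 - p) * lam * pi (Sa k)) by (repeat apply Rmult_lt_0_compat; lra).
      assert (0 < (mua + (1 - p) * lam) * pi (Sb k)).
      { apply Rmult_lt_0_compat. assert (0 < (1 - p) * lam) by (apply Rmult_lt_0_compat; lra). lra. lra. }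
      lra. }
    rewrite EX, EY. field. repeat split; lra. }
  destruct (ratio_conv lam la lb mua mub gamma (fun k => pi (Sa k) / pi (Sb k)) (fun k => P (S (S k)))
     hla hlb Hl hmua hmub hgamma) as [Heta Hcv].
  { intro k. destruct (Hpos k). apply Rlt_le, Rdiv_lt_0_compat; lra. }
  { intro k. destruct (HP (S (S k))). split; lra. }
  { exact HPc. }
  { exact HT. }
  split; [exact Hcv|].
  set (eta := / (2 * lam) * (sqrt ((lam - gamma + mua - mub) ^ 2 + 4 * lam * gamma) + gamma - lam + mub - mua)) in *.
  clearbody eta.
  apply cv_dom with (u := fun k => pi (Sa k) / pi (Sb k)) (l := eta) (C := Rabs (mua - mub) + 1);
    [pose proof (Rabs_pos (mua - mub)); lra | | exact Hcv].
  intro k. destruct (Hpos k) as [X0 Y0].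
  set (t := pi (Sa k) / pi (Sb k)).
  assert (Ht : 0 <= t) by (apply Rlt_le, Rdiv_lt_0_compat; lra).
  assert (E : (mua * pi (Sa k) + mub * pi (Sb k)) / (pi (Sa k) + pi (Sb k)) -
              (mub + eta / (1 + eta) * (mua - mub)) = (mua - mub) * (t - eta) * / ((t + 1) * (eta + 1))).
  { unfold t. field. repeat split; lra. }
  rewrite E, Rabs_mult, Rabs_mult.
  assert (Hw : 0 < / ((t + 1) * (eta + 1)) <= 1).
  { split. apply Rinv_0_lt_compat, Rmult_lt_0_compat; lra.
    rewrite <- Rinv_1. apply Rinv_le_contravar. lra.
    assert (0 <= t * eta) by (apply Rmult_le_pos; lra). nra. }
  rewrite (Rabs_pos_eq (/ _)) by lra.
  pose proof (Rabs_pos (mua - mub)). pose proof (Rabs_pos (t - eta)).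
  assert (Rabs (mua - mub) * Rabs (t - eta) * / ((t + 1) * (eta + 1)) <= Rabs (mua - mub) * Rabs (t - eta)).
  { rewrite <- (Rmult_1_r (Rabs (mua - mub) * Rabs (t - eta))) at 2.
    apply Rmult_le_compat_l. apply Rmult_le_pos; lra. lra. }
  assert (0 <= Rabs (mua - mub) * Rabs (t - eta)) by (apply Rmult_le_pos; lra).
  lra.
Qed.
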